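(* The Heawood graph is $4$-ordered hamiltonian.
   Context: A simple graph $G$ is called $k$-ordered hamiltonian if for every sequence $v_1,\ldots,v_k$ of $k$ distinct vertices of $G$ there exists a hamiltonian cycle in $G$ (a cycle through all vertices) containing these $k$ vertices in the specified (cyclic) order. The Heawood graph is the $3$-regular bipartite graph on $14$ vertices given by the point–line incidence graph of the Fano plane; equivalently, it is the graph with vertices $0,1,\ldots,13$ forming a hamiltonian cycle $0-1-2-\cdots-13-0$, together with the chords joining $i$ and $i+5 \pmod{14}$ for every even $i$. *)

(* Defs.v *)
From mathcomp Require Import all_boot.
Set Implicit Arguments. Unset Strict Implicit. Unset Printing Implicit Defensive.

(* A simple graph is a symmetric irreflexive relation [adj] on a finite type. *)

Definition hamiltonian_cycle (T : finType) (adj : rel T) (c : seq T) : bool :=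
  [&& uniq c, all (fun v => v \in c) (enum T) & cycle adj c].

Definition in_cyclic_order (T : eqType) (s c : seq T) : Prop :=
  exists r : nat, subseq s (rot r c).

Definition k_ordered_hamiltonian (T : finType) (adj : rel T) (k : nat) : Prop :=
  forall s : seq T, size s = k -> uniq s ->
    exists c : seq T, hamiltonian_cycle adj c /\ in_cyclic_order s c.

Definition heawood_arc (i j : nat) : bool :=
  (j == i.+1 %% 14) || (~~ odd i && (j == (i + 5) %% 14)).

Definition heawood_adj : rel 'I_14 :=
  fun i j => heawood_arc i j || heawood_arc j i.

Lemma heawood_sym : symmetric heawood_adj.
Proof. by move=> i j; rewrite /heawood_adj orbC. Qed.

Lemma heawood_irrefl : irreflexive heawood_adj.
Proof. by move=> i; apply/negP; case: i; do 14?case=> //. Qed.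

(* Main.v *)
Require Import Defs.
From mathcomp Require Import all_boot.

Definition cyc_nat : seq (seq nat) :=
[:: [:: 0; 1; 2; 3; 4; 9; 10; 11; 12; 13; 8; 7; 6; 5];
 [:: 0; 1; 2; 3; 4; 5; 6; 7; 8; 9; 10; 11; 12; 13];
 [:: 0; 1; 2; 3; 12; 11; 10; 9; 4; 5; 6; 7; 8; 13];
 [:: 0; 1; 2; 3; 12; 13; 8; 7; 6; 11; 10; 9; 4; 5];
 [:: 0; 1; 2; 7; 8; 9; 10; 11; 6; 5; 4; 3; 12; 13];
 [:: 0; 1; 2; 7; 8; 13; 12; 3; 4; 9; 10; 11; 6; 5];
 [:: 0; 1; 2; 7; 6; 11; 10; 9; 8; 13; 12; 3; 4; 5];
 [:: 0; 1; 2; 7; 6; 5; 4; 3; 12; 11; 10; 9; 8; 13];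
 [:: 0; 1; 10; 9; 8; 13; 12; 11; 6; 7; 2; 3; 4; 5];
 [:: 0; 1; 10; 9; 8; 7; 2; 3; 4; 5; 6; 11; 12; 13];
 [:: 0; 1; 10; 9; 4; 3; 2; 7; 8; 13; 12; 11; 6; 5];
 [:: 0; 1; 10; 9; 4; 5; 6; 11; 12; 3; 2; 7; 8; 13];
 [:: 0; 1; 10; 11; 12; 3; 2; 7; 6; 5; 4; 9; 8; 13];
 [:: 0; 1; 10; 11; 12; 13; 8; 9; 4; 3; 2; 7; 6; 5];
 [:: 0; 1; 10; 11; 6; 5; 4; 9; 8; 7; 2; 3; 12; 13];
 [:: 0; 1; 10; 11; 6; 7; 2; 3; 12; 13; 8; 9; 4; 5];
 [:: 0; 13; 8; 9; 10; 11; 12; 3; 4; 5; 6; 7; 2; 1];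
 [:: 0; 13; 8; 9; 10; 1; 2; 7; 6; 11; 12; 3; 4; 5];
 [:: 0; 13; 8; 9; 4; 3; 12; 11; 10; 1; 2; 7; 6; 5];
 [:: 0; 13; 8; 9; 4; 5; 6; 7; 2; 3; 12; 11; 10; 1];
 [:: 0; 13; 8; 7; 2; 1; 10; 9; 4; 3; 12; 11; 6; 5];
 [:: 0; 13; 8; 7; 2; 3; 12; 11; 6; 5; 4; 9; 10; 1];
 [:: 0; 13; 8; 7; 6; 11; 12; 3; 2; 1; 10; 9; 4; 5];
 [:: 0; 13; 8; 7; 6; 5; 4; 9; 10; 11; 12; 3; 2; 1];
 [:: 0; 13; 12; 3; 2; 1; 10; 11; 6; 7; 8; 9; 4; 5];
 [:: 0; 13; 12; 3; 2; 7; 8; 9; 4; 5; 6; 11; 10; 1];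
 [:: 0; 13; 12; 3; 4; 9; 8; 7; 2; 1; 10; 11; 6; 5];
 [:: 0; 13; 12; 3; 4; 5; 6; 11; 10; 9; 8; 7; 2; 1];
 [:: 0; 13; 12; 11; 10; 9; 8; 7; 6; 5; 4; 3; 2; 1];
 [:: 0; 13; 12; 11; 10; 1; 2; 3; 4; 9; 8; 7; 6; 5];
 [:: 0; 13; 12; 11; 6; 5; 4; 3; 2; 7; 8; 9; 10; 1];
 [:: 0; 13; 12; 11; 6; 7; 8; 9; 10; 1; 2; 3; 4; 5];
 [:: 0; 5; 4; 9; 8; 13; 12; 3; 2; 7; 6; 11; 10; 1];
 [:: 0; 5; 4; 9; 8; 7; 6; 11; 10; 1; 2; 3; 12; 13];
 [:: 0; 5; 4; 9; 10; 11; 6; 7; 8; 13; 12; 3; 2; 1];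
 [:: 0; 5; 4; 9; 10; 1; 2; 3; 12; 11; 6; 7; 8; 13];
 [:: 0; 5; 4; 3; 2; 1; 10; 9; 8; 7; 6; 11; 12; 13];
 [:: 0; 5; 4; 3; 2; 7; 6; 11; 12; 13; 8; 9; 10; 1];
 [:: 0; 5; 4; 3; 12; 11; 6; 7; 2; 1; 10; 9; 8; 13];
 [:: 0; 5; 4; 3; 12; 13; 8; 9; 10; 11; 6; 7; 2; 1];
 [:: 0; 5; 6; 11; 10; 9; 4; 3; 12; 13; 8; 7; 2; 1];
 [:: 0; 5; 6; 11; 10; 1; 2; 7; 8; 9; 4; 3; 12; 13];
 [:: 0; 5; 6; 11; 12; 3; 4; 9; 10; 1; 2; 7; 8; 13];
 [:: 0; 5; 6; 11; 12; 13; 8; 7; 2; 3; 4; 9; 10; 1];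
 [:: 0; 5; 6; 7; 8; 9; 4; 3; 2; 1; 10; 11; 12; 13];
 [:: 0; 5; 6; 7; 8; 13; 12; 11; 10; 9; 4; 3; 2; 1];
 [:: 0; 5; 6; 7; 2; 1; 10; 11; 12; 3; 4; 9; 8; 13];
 [:: 0; 5; 6; 7; 2; 3; 4; 9; 8; 13; 12; 11; 10; 1]].

Definition adjn (i j : nat) : bool := heawood_arc i j || heawood_arc j i.

Definition good_cyc (c : seq nat) : bool :=
  [&& uniq c, all (fun x => x < 14) c, all (fun v => v \in c) (iota 0 14) & cycle adjn c].

Lemma cyc_good : all good_cyc cyc_nat.
Proof. vm_compute. reflexivity. Qed.

Definition cover_nat : bool :=
  all (fun a => all (fun b => all (fun c => all (fun d =>
    uniq [:: a; b; c; d] ==> has (fun cy => subseq [:: a; b; c; d] (rot (index a cy) cy)) cyc_nat)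
    (iota 0 14)) (iota 0 14)) (iota 0 14)) (iota 0 14).

Lemma cover_ok : cover_nat.
Proof. vm_compute. reflexivity. Qed.

Lemma ham_of_good (c : seq nat) : good_cyc c ->
  hamiltonian_cycle heawood_adj (map (@inord 13) c).
Proof.
case/and4P=> Hu Hlt Hall Hcy.
have Hval : map val (map (@inord 13) c) = c.
  rewrite -map_comp -[RHS]map_id; apply/eq_in_map => x /= Hx.
  by rewrite inordK //; exact: (allP Hlt).
apply/and3P; split.
- by rewrite -(map_inj_uniq val_inj) Hval.
- apply/allP=> v _; rewrite -(inord_val v); apply: map_f.
  by apply: (allP Hall); rewrite mem_iota /= add0n ltn_ord.
- by rewrite -[cycle _ _](@cycle_map _ _ val adjn) Hval.
Qed.

Theorem theorem3p3 : k_ordered_hamiltonian heawood_adj 4.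
Proof.
move=> s; case: s => [|a [|b [|c [|d [|e s]]]]] //= _ Hu.
have mi (x : 'I_14) : val x \in iota 0 14 by rewrite mem_iota add0n ltn_ord.
have := cover_ok; rewrite /cover_nat.
move/allP/(_ _ (mi a))/allP/(_ _ (mi b))/allP/(_ _ (mi c))/allP/(_ _ (mi d)).
have -> : uniq [:: val a; val b; val c; val d].
  by change (uniq (map val [:: a; b; c; d])); rewrite (map_inj_uniq val_inj).
rewrite implyTb.
move=> /hasP [cy Hin Hsub].
exists (map (@inord 13) cy); split.
  by apply: ham_of_good; exact: (allP cyc_good).
exists (index (val a) cy).
have := map_subseq (@inord 13) Hsub.
by rewrite map_rot /= !inord_val.
Qed.
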